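(* Let $f_1,f_2:\mathbb R^d\to\mathbb R$ be convex with $\nabla f_i$ globally Lipschitz continuous with modulus $L_i>0$ ($i=1,2$), let $f_3:\mathbb R^d\to\mathbb R\cup\{+\infty\}$ be proper and lower semicontinuous, and assume $\varphi:=f_1+f_2+f_3$ has a nonempty set of minimizers. Let $\gamma\in(0,\frac{1}{L_1+L_2})$ and $\lambda,\alpha>0$, and let $(x_1^k,x_2^k,x_3^k)_k$, $(z_1^k,z_2^k)_k$ be generated by the relaxed Ryu splitting method. Set $\xi^k=\big(x_1^k,x_2^k,x_3^k,\gamma^{-1}(x_1^k-z_1^k),\gamma^{-1}(\alpha(x_2^k-x_1^k)-z_2^k)\big)$. Then for all $k\ge1$, $\varphi_\gamma^{\mathrm{Ryu}}(z_1^k,z_2^k)=\mathcal L_{1/\gamma_1,1/\gamma_2}(\xi^k)$, where $\gamma_1=\gamma/\alpha$, $\gamma_2=\gamma/(1-\alpha)$.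
   Context: For $h:\mathbb R^d\to\mathbb R\cup\{+\infty\}$ and $\gamma>0$, $\mathrm{prox}_{\gamma h}(z):=\operatorname{argmin}_{y}\{h(y)+\frac{1}{2\gamma}\|y-z\|^2\}$. Conventions $\frac{c}{0}=\infty$, $\frac{d}{\infty}=0$ ($c>0,d\in\mathbb R$). The relaxed Ryu splitting method: given $z_1^0,z_2^0\in\mathbb R^d$, for $k\ge0$, $x_1^k=\mathrm{prox}_{\gamma f_1}(z_1^k)$, $x_2^k=\mathrm{prox}_{\frac{\gamma}{\alpha}f_2}(\frac{z_2^k}{\alpha}+x_1^k)$, $x_3^k\in\mathrm{prox}_{\gamma f_3}(x_1^k-z_1^k+x_2^k-z_2^k)$, $z_1^{k+1}=z_1^k+\lambda(x_3^k-x_1^k)$, $z_2^{k+1}=z_2^k+\lambda(x_3^k-x_2^k)$. Relaxed Ryu envelope: for $(z_1,z_2)$, $x_1=\mathrm{prox}_{\gamma f_1}(z_1)$, $x_2=\mathrm{prox}_{\frac{\gamma}{\alpha}f_2}(\frac{z_2}{\alpha}+x_1)$, $\varphi_\gamma^{\mathrm{Ryu}}(z_1,z_2):=\min_{y}\{f_3(y)+\sum_{i=1}^2[f_i(x_i)+\langle y-x_i,\nabla f_i(x_i)\rangle+\frac{1}{2\gamma_i}\|y-x_i\|^2]\}$. Augmented Lagrangian: $\mathcal L_{\beta_1,\beta_2}(x_1,x_2,x_3,\mu_1,\mu_2)=f_3(x_3)+\sum_{i=1}^2\big(f_i(x_i)+\langle\mu_i,x_i-x_3\rangle+\frac{\beta_i}{2}\|x_i-x_3\|^2\big)$.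 *)

(* Defs.v *)
From HB Require Import structures.
From mathcomp Require Import all_boot all_order all_algebra.
From mathcomp Require Import all_classical all_reals all_analysis.
Set Implicit Arguments. Unset Strict Implicit. Unset Printing Implicit Defensive.
Import Order.TTheory GRing.Theory Num.Theory.
Import numFieldNormedType.Exports.
Local Open Scope classical_set_scope.
Local Open Scope ring_scope.

Section Defs.
Variables (R : realType) (d : nat).
Notation V := 'rV[R]_d.

(* Euclidean inner product and squared Euclidean norm on R^d
   (NB: the library norm on 'rV is the max norm, so we use these instead). *)
Definition inner (u v : V) : R := \sum_(i < d) u ord0 i * v ord0 i.
Definition sqnorm (u : V) : R := inner u u.
Definition enorm (u : V) : R := Num.sqrt (sqnorm u).

Definition convex_fun (f : V -> R) : Prop :=
  forall (x y : V) (t : R), 0 <= t -> t <= 1 ->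
    f (t *: x + (1 - t) *: y) <= t * f x + (1 - t) * f y.

Definition is_gradient (f : V -> R) (g : V -> V) : Prop :=
  forall x, differentiable f x /\ forall h, 'd f x h = inner (g x) h.

Definition lipschitz_mod (g : V -> V) (L : R) : Prop :=
  forall x y, enorm (g x - g y) <= L * enorm (x - y).

Definition proper_fun (h : V -> \bar R) : Prop :=
  (exists x, h x \is a fin_num) /\ (forall x, h x != -oo%E).

Definition prox_set (gamma : R) (h : V -> \bar R) (z : V) : set V :=
  [set x | forall y, (h x + (sqnorm (x - z) / (2 * gamma))%:E
                      <= h y + (sqnorm (y - z) / (2 * gamma))%:E)%E].

(* the (single-valued, for convex smooth h) proximal map; chosen element *)
Definition prox (gamma : R) (h : V -> \bar R) (z : V) : V :=
  xget 0 (prox_set gamma h z).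

(* Relaxed Ryu envelope.  ig1 = 1/gamma_1 = alpha/gamma and
   ig2 = 1/gamma_2 = (1-alpha)/gamma (conventions c/0 = oo, d/oo = 0),
   so 1/(2 gamma_i) = ig_i / 2.  The min over y is rendered as an infimum. *)
Definition ryu_env (gamma alpha : R) (f1 f2 : V -> R) (f3 : V -> \bar R)
    (g1 g2 : V -> V) (z1 z2 : V) : \bar R :=
  let x1 := prox gamma (fun x => (f1 x)%:E) z1 in
  let x2 := prox (gamma / alpha) (fun x => (f2 x)%:E) (alpha^-1 *: z2 + x1) in
  let ig1 := alpha / gamma in
  let ig2 := (1 - alpha) / gamma in
  ereal_inf [set (f3 y
     + (f1 x1 + inner (y - x1) (g1 x1) + ig1 / 2 * sqnorm (y - x1)
      + (f2 x2 + inner (y - x2) (g2 x2) + ig2 / 2 * sqnorm (y - x2)))%:E)%E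
   | y in [set: V]].

Definition aug_lag (beta1 beta2 : R) (f1 f2 : V -> R) (f3 : V -> \bar R)
    (x1 x2 x3 mu1 mu2 : V) : \bar R :=
  (f3 x3 + (f1 x1 + inner mu1 (x1 - x3) + beta1 / 2 * sqnorm (x1 - x3)
          + (f2 x2 + inner mu2 (x2 - x3) + beta2 / 2 * sqnorm (x2 - x3)))%:E)%E.

End Defs.

(* Main.v *)
Require Import Defs.
From HB Require Import structures.
From mathcomp Require Import all_boot all_order all_algebra.
From mathcomp Require Import all_classical all_reals all_analysis.
From mathcomp Require Import ring lra.
Import Order.TTheory GRing.Theory Num.Theory.
Import numFieldNormedType.Exports.
Local Open Scope classical_set_scope.
Local Open Scope ring_scope.

Section S.
Variables (R : realType) (d : nat).
Notation V := 'rV[R]_d.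

Lemma sqnorm_ge0 (u : V) : 0 <= sqnorm u.
Proof. by apply: sumr_ge0 => i _; rewrite -expr2 sqr_ge0. Qed.

Lemma sqnorm_eq0 (u : V) : sqnorm u = 0 -> u = 0.
Proof.
move=> /eqP; rewrite /sqnorm /inner psumr_eq0; last by move=> i _; rewrite -expr2 sqr_ge0.
move=> /allP H; apply/rowP => i; rewrite mxE.
have := H i (mem_index_enum i); rewrite -expr2 sqrf_eq0 => /eqP.
by rewrite (ord1 ord0).
Qed.

Lemma sqnorm_shift (s : R) (h b : V) :
  sqnorm (s *: h + b) = sqnorm b + 2 * s * inner b h + s ^+ 2 * sqnorm h.
Proof.
rewrite /sqnorm /inner !mulr_sumr -!big_split; apply: eq_bigr => i _.
rewrite /= !mxE; ring.
Qed.

Lemma opt_cond (f : V -> R) (g : V -> V) (c : R) (z x : V) :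
  0 < c -> is_gradient f g ->
  (forall y, f x + sqnorm (x - z) / (2 * c) <= f y + sqnorm (y - z) / (2 * c)) ->
  g x = c^-1 *: (z - x).
Proof.
move=> c0 gradf Hmin.
set u := g x + c^-1 *: (x - z).
suff : u = 0.
  move=> /eqP; rewrite addr_eq0 => /eqP ->; rewrite -scalerN opprB //.
set h := - u.
have [dfx dfE] := gradf x.
have Hd : derivable f x h by apply: diff_derivable.
have Hq : (fun s : R => s^-1 *: ((f \o shift x) (s *: h) - f x)) @ 0^' --> inner (g x) h.
  by rewrite -dfE -deriveE.
set m := - (inner (x - z) h / c).
set K := sqnorm h / (2 * c).
have Hp : (fun s : R => s^-1 *: ((f \o shift x) (s *: h) - f x) + s * K) @ 0^'+ --> inner (g x) h + 0 * K.
  have sub : (0:R)^'+ `=>` (0:R)^'.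
    move=> P; rewrite /dnbhs /at_right /within /=; apply: filterS => y Hy y0; apply: Hy; by rewrite /= gt_eqF.
  apply: cvgD; first exact: cvg_trans (cvg_app _ sub) Hq.
  apply: cvgMl. apply: cvg_at_right_filter. exact: cvg_id.
have Hev : \forall s \near 0^'+, [set r | m <= r] ((fun s : R => s^-1 *: ((f \o shift x) (s *: h) - f x) + s * K) s).
  near=> s.
  have s0 : 0 < s by near: s; exact: nbhs_right_gt.
  rewrite /= /m /K.
  have := Hmin (s *: h + x).
  rewrite (_ : s *: h + x - z = s *: h + (x - z)); last by rewrite addrA.
  rewrite sqnorm_shift => H.
  have sn0 : s != 0 by rewrite gt_eqF.
  have cn0 : c != 0 by rewrite gt_eqF.
  have c2 : 2 * c != 0 by rewrite mulf_neq0 // gt_eqF.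
  have e1 : (sqnorm (x - z) + 2 * s * inner (x - z) h + s ^+ 2 * sqnorm h) / (2 * c)
     = sqnorm (x - z) / (2 * c) + s * (inner (x - z) h / c) + s ^+ 2 * (sqnorm h / (2 * c)).
    by field; rewrite ?cn0 ?sn0.
  rewrite e1 in H.
  have e2 : - (inner (x - z) h / c) = s^-1 * (- (s * (inner (x - z) h / c))) by field; rewrite ?cn0 ?sn0.
  have e3 : s * (sqnorm h / (2 * c)) = s^-1 * (s ^+ 2 * (sqnorm h / (2 * c))) by field; rewrite ?cn0 ?sn0.
  rewrite e2 e3 /= -mulrDr ler_pM2l ?invr_gt0 //.
  lra.
have := @closed_cvg _ _ _ (at_right_proper_filter 0) _ _ (@closed_ge R m) Hev _ Hp.
rewrite /= mul0r addr0 /m => Hge.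
have e1 : inner u h = inner (g x) h + inner (x - z) h / c.
  rewrite /inner mulr_suml -big_split; apply: eq_bigr => i _; rewrite /= /u !mxE; ring.
have e2 : inner u h = - sqnorm u.
  rewrite /sqnorm /inner -sumrN; apply: eq_bigr => i _; rewrite /h !mxE; ring.
apply: sqnorm_eq0; apply/eqP; rewrite eq_le sqnorm_ge0 andbT -oppr_ge0 -e2 e1.
lra.
Unshelve. all: by end_near. Qed.

Lemma prox_real (f : V -> R) c z a :
  prox_set c (fun x => (f x)%:E) z a ->
  forall y, f a + sqnorm (a - z) / (2 * c) <= f y + sqnorm (y - z) / (2 * c).
Proof. by move=> H y; have := H y; rewrite -!EFinD lee_fin. Qed.

Lemma sqnorm_mid (a b z : V) :
  sqnorm ((1/2 : R) *: a + (1 - 1/2) *: b - z) =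
  sqnorm (a - z) / 2 + sqnorm (b - z) / 2 - sqnorm (a - b) / 4.
Proof.
rewrite /sqnorm /inner !mulr_suml -big_split -sumrB; apply: eq_bigr => i _.
rewrite /= !mxE; by field.
Qed.

Lemma prox_uniq (f : V -> R) c z a : 0 < c -> convex_fun f ->
  prox_set c (fun x => (f x)%:E) z a -> prox c (fun x => (f x)%:E) z = a.
Proof.
move=> c0 cvx Ha.
have Hb : prox_set c (fun x => (f x)%:E) z (prox c (fun x => (f x)%:E) z).
  by apply: xgetPex; exists a.
move: (prox c _ z) Hb => b Hb.
have Ha' := @prox_real f c z a Ha; have Hb' := @prox_real f c z b Hb.
set m := (1/2 : R) *: a + (1 - 1/2) *: b.
have Hm := cvx a b (1/2) ltac:(lra) ltac:(lra).
have H1 := Ha' m; have H2 := Hb' a.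
rewrite sqnorm_mid in H1.
have cn0 : c != 0 by rewrite gt_eqF.
have e : (sqnorm (a - z) / 2 + sqnorm (b - z) / 2 - sqnorm (a - b) / 4) / (2 * c)
  = (sqnorm (a - z) / (2 * c)) / 2 + (sqnorm (b - z) / (2 * c)) / 2 - (sqnorm (a - b) / (2 * c)) / 4.
  by field; rewrite ?cn0.
rewrite e in H1.
have D0 : 0 <= sqnorm (a - b) / (2 * c) by rewrite divr_ge0 ?sqnorm_ge0 // mulr_ge0 // ltW.
have D1 : sqnorm (a - b) / (2 * c) = 0 by lra.
move: D1 => /eqP; rewrite mulf_eq0 invr_eq0 mulf_eq0 (negbTE cn0) orbF /= => /orP [/eqP|].
  by move=> /sqnorm_eq0 /eqP; rewrite subr_eq0 => /eqP.
by rewrite pnatr_eq0.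
Qed.


Lemma expandQ (y a b u v w : V) (c1 c2 F1 F2 gam : R) :
  F1 + inner (y - a) u + c1 / 2 * sqnorm (y - a) +
  (F2 + inner (y - b) v + c2 / 2 * sqnorm (y - b)) - sqnorm (y - w) / (2 * gam)
  = F1 + F2 + \sum_(i < d) ((y - a) ord0 i * u ord0 i
      + c1 / 2 * ((y - a) ord0 i * (y - a) ord0 i)
      + (y - b) ord0 i * v ord0 i
      + c2 / 2 * ((y - b) ord0 i * (y - b) ord0 i)
      - (y - w) ord0 i * (y - w) ord0 i / (2 * gam)).
Proof.
rewrite sumrB !big_split /= -!mulr_sumr -mulr_suml /sqnorm /inner.
ring.
Qed.

End S.

Theorem lemma6 (R : realType) (d : nat)
  (f1 f2 : 'rV[R]_d -> R) (g1 g2 : 'rV[R]_d -> 'rV[R]_d) (L1 L2 : R)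
  (f3 : 'rV[R]_d -> \bar R)
  (gamma lambda alpha : R)
  (x1 x2 x3 z1 z2 : nat -> 'rV[R]_d) :
  convex_fun f1 -> convex_fun f2 ->
  is_gradient f1 g1 -> is_gradient f2 g2 ->
  0 < L1 -> 0 < L2 -> lipschitz_mod g1 L1 -> lipschitz_mod g2 L2 ->
  proper_fun f3 -> lower_semicontinuous f3 ->
  (exists xs : 'rV[R]_d, forall x : 'rV[R]_d,
      ((f1 xs + f2 xs)%:E + f3 xs <= (f1 x + f2 x)%:E + f3 x)%E) ->
  0 < gamma -> gamma < 1 / (L1 + L2) -> 0 < lambda -> 0 < alpha ->
  (forall k, prox_set gamma (fun x => (f1 x)%:E) (z1 k) (x1 k)) ->
  (forall k, prox_set (gamma / alpha) (fun x => (f2 x)%:E)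
                 (alpha^-1 *: z2 k + x1 k) (x2 k)) ->
  (forall k, prox_set gamma f3 (x1 k - z1 k + x2 k - z2 k) (x3 k)) ->
  (forall k, z1 k.+1 = z1 k + lambda *: (x3 k - x1 k)) ->
  (forall k, z2 k.+1 = z2 k + lambda *: (x3 k - x2 k)) ->
  forall k, (1 <= k)%N ->
    ryu_env gamma alpha f1 f2 f3 g1 g2 (z1 k) (z2 k) =
    aug_lag (alpha / gamma) ((1 - alpha) / gamma) f1 f2 f3
      (x1 k) (x2 k) (x3 k)
      (gamma^-1 *: (x1 k - z1 k))
      (gamma^-1 *: (alpha *: (x2 k - x1 k) - z2 k)).
Proof.
move=> cvx1 cvx2 gr1 gr2 _ _ _ _ _ _ _ g0 _ l0 a0 Hx1 Hx2 Hx3 _ _ k _.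
have ga0 : 0 < gamma / alpha by rewrite divr_gt0.
have gn0 : gamma != 0 by rewrite gt_eqF.
have an0 : alpha != 0 by rewrite gt_eqF.
have P1 : prox gamma (fun x => (f1 x)%:E) (z1 k) = x1 k :=
  @prox_uniq R d f1 gamma (z1 k) (x1 k) g0 cvx1 (Hx1 k).
have P2 : prox (gamma / alpha) (fun x => (f2 x)%:E) (alpha^-1 *: z2 k + x1 k) = x2 k :=
  @prox_uniq R d f2 (gamma / alpha) _ (x2 k) ga0 cvx2 (Hx2 k).
have G1 : g1 (x1 k) = gamma^-1 *: (z1 k - x1 k) :=
  @opt_cond R d f1 g1 gamma (z1 k) (x1 k) g0 gr1 (@prox_real R d f1 gamma (z1 k) (x1 k) (Hx1 k)).
have G2 : g2 (x2 k) = (gamma / alpha)^-1 *: (alpha^-1 *: z2 k + x1 k - x2 k) :=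
  @opt_cond R d f2 g2 (gamma / alpha) _ (x2 k) ga0 gr2 (@prox_real R d f2 _ _ (x2 k) (Hx2 k)).
rewrite /ryu_env; cbv zeta; rewrite P1 P2.
set w := x1 k - z1 k + x2 k - z2 k.
pose Q y := f1 (x1 k) + inner (y - x1 k) (g1 (x1 k)) + alpha / gamma / 2 * sqnorm (y - x1 k)
   + (f2 (x2 k) + inner (y - x2 k) (g2 (x2 k)) + (1 - alpha) / gamma / 2 * sqnorm (y - x2 k)).
have HQ : forall y, Q y = Q (x3 k) - sqnorm (x3 k - w) / (2 * gamma) + sqnorm (y - w) / (2 * gamma).
  move=> y.
  suff H : Q y - sqnorm (y - w) / (2 * gamma) = Q (x3 k) - sqnorm (x3 k - w) / (2 * gamma).
    by rewrite -H; ring.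
  rewrite /Q !expandQ; congr (_ + _); apply: eq_bigr => i _.
  by rewrite G1 G2 /w !mxE; field; rewrite ?gn0 ?an0.
have Hinf : ereal_inf [set (f3 y + (Q y)%:E)%E | y in [set: 'rV[R]_d]] = (f3 (x3 k) + (Q (x3 k))%:E)%E.
  apply/eqP; rewrite eq_le; apply/andP; split.
    by apply: ereal_inf_lbound; exists (x3 k).
  apply: le_ereal_inf_tmp => _ [y _ <-].
  rewrite (HQ y) [X in (f3 (x3 k) + X%:E)%E](HQ (x3 k)).
  set C := Q (x3 k) - _.
  rewrite !EFinD !(addrC C%:E) !addeA.
  apply: leeD2r.
  exact: (Hx3 k y).
rewrite Hinf /aug_lag /Q.
congr (_ + EFin _)%E.
congr (_ + _ + _ + (_ + _ + _)); rewrite ?G1 ?G2; try congr (_ * _);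
  rewrite /sqnorm /inner; apply: eq_bigr => i _; rewrite !mxE; by field; rewrite ?gn0 ?an0.
Qed.
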